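(* Let $k$ be a field and let $M$ be the $\mathrm{FI}^2$-module with $M_{a,b}=0$ for $(a,b)\in\{(0,0),(1,0),(0,1)\}$ and $M_{a,b}=k$ otherwise, in which every morphism induces the identity $k\to k$ or the zero map out of $0$. Then $M$ is indecomposable, and $M$ is not isomorphic to a direct sum of external tensor products $V\boxtimes W$ of $\mathrm{FI}$-modules $V,W$.
   Context: $\mathrm{FI}^2$ has objects pairs $(a,b)\in\mathbb{N}^2$ and morphisms pairs of injections $[a]\hookrightarrow[a']$, $[b]\hookrightarrow[b']$. An $\mathrm{FI}^2$-module is a functor to $k$-vector spaces. For $\mathrm{FI}$-modules $V,W$, $(V\boxtimes W)_{a,b}=V_a\otimes W_b$. *)

(* Defs.v *)
From HB Require Import structures.
From mathcomp Require Import all_boot all_order all_algebra.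
Set Implicit Arguments. Unset Strict Implicit. Unset Printing Implicit Defensive.
Import GRing.Theory.
Local Open Scope ring_scope.

(* Objects: natural numbers a (standing for [a] = {0,..,a-1} = 'I_a).  We use finite functions and
   impose injectivity (injF) wherever a morphism is required. *)
Definition FImor (a a' : nat) := {ffun 'I_a -> 'I_a'}.
Definition injF (a a' : nat) (f : FImor a a') : bool := injectiveb f.
Definition idF (a : nat) : FImor a a := [ffun i => i].
Definition compF (a a' a'' : nat) (f' : FImor a' a'') (f : FImor a a') : FImor a a'' :=
  [ffun i => f' (f i)].

Record FImod (k : fieldType) := FIMod {
  FIobj : nat -> lmodType k;
  FImap : forall a a', FImor a a' -> FIobj a -> FIobj a' }.
Arguments FImap {k} _ {a a'} _ _.

Definition isFImod (k : fieldType) (V : FImod k) : Prop :=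
  [/\ (forall a a' (f : FImor a a'), injF f -> linear (FImap V f)),
      (forall a (x : FIobj V a), FImap V (idF a) x = x) &
      (forall a a' a'' (f : FImor a a') (f' : FImor a' a''),
         injF f -> injF f' -> forall x : FIobj V a,
         FImap V (compF f' f) x = FImap V f' (FImap V f x))].

Record FI2mod (k : fieldType) := FI2Mod {
  F2obj : nat -> nat -> lmodType k;
  F2map : forall a b a' b', FImor a a' -> FImor b b' -> F2obj a b -> F2obj a' b' }.
Arguments F2map {k} _ {a b a' b'} _ _ _.

Definition isFI2mod (k : fieldType) (X : FI2mod k) : Prop :=
  [/\ (forall a b a' b' (f : FImor a a') (g : FImor b b'),
         injF f -> injF g -> linear (F2map X f g)),
      (forall a b (x : F2obj X a b), F2map X (idF a) (idF b) x = x) &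
      (forall a b a' b' a'' b'' (f : FImor a a') (g : FImor b b')
              (f' : FImor a' a'') (g' : FImor b' b''),
         injF f -> injF g -> injF f' -> injF g' -> forall x : F2obj X a b,
         F2map X (compF f' f) (compF g' g) x = F2map X f' g' (F2map X f g x))].

Definition isFI2hom (k : fieldType) (A B : FI2mod k)
    (phi : forall a b, F2obj A a b -> F2obj B a b) : Prop :=
  (forall a b, linear (phi a b)) /\
  (forall a b a' b' (f : FImor a a') (g : FImor b b'), injF f -> injF g ->
     forall x : F2obj A a b, phi a' b' (F2map A f g x) = F2map B f g (phi a b x)).

Definition isZeroFI2 (k : fieldType) (X : FI2mod k) : Prop :=
  forall a b (x : F2obj X a b), x = 0.

(* [is_dsum N X iota]: the natural maps iota i : N i -> X induce an
   isomorphism  (direct sum over i of N i) ~= X, i.e. pointwise the induced map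
   from the (finitely supported) direct sum is surjective and injective. *)
Definition is_dsum (k : fieldType) (I : eqType) (N : I -> FI2mod k) (X : FI2mod k)
    (iota : forall i a b, F2obj (N i) a b -> F2obj X a b) : Prop :=
  (forall i, isFI2hom (iota i)) /\
  (forall a b,
    (forall x : F2obj X a b, exists (s : seq I) (y : forall i, F2obj (N i) a b),
        x = \sum_(i <- s) iota i a b (y i)) /\
    (forall (s : seq I) (y : forall i, F2obj (N i) a b), uniq s ->
        \sum_(i <- s) iota i a b (y i) = 0 -> forall i, i \in s -> y i = 0)).
Arguments is_dsum {k I} N X iota.

Definition indecomposableFI2 (k : fieldType) (X : FI2mod k) : Prop :=
  ~ isZeroFI2 X /\
  forall (N : bool -> FI2mod k) (iota : forall i a b, F2obj (N i) a b -> F2obj X a b),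
    (forall i, isFI2mod (N i)) -> is_dsum N X iota -> exists i, isZeroFI2 (N i).

Definition bilinear_map (k : fieldType) (U V Z : lmodType k) (phi : U -> V -> Z) : Prop :=
  (forall v, linear (fun u => phi u v)) /\ (forall u, linear (phi u)).

Definition is_tensor (k : fieldType) (U V T : lmodType k) (beta : U -> V -> T) : Prop :=
  bilinear_map beta /\
  forall (Z : lmodType k) (phi : U -> V -> Z), bilinear_map phi ->
    exists psi : T -> Z,
      [/\ linear psi, (forall u v, psi (beta u v) = phi u v) &
          (forall psi' : T -> Z, linear psi' -> (forall u v, psi' (beta u v) = phi u v) ->
             forall t, psi' t = psi t)].
Arguments is_tensor {k U V T} beta.

(* [is_ext_tensor V W X]: X ~= V ⊠ W, i.e. X_{a,b} = V_a ⊗ W_b (via beta) and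
   the structure maps of X are V(f) ⊗ W(g). *)
Definition is_ext_tensor (k : fieldType) (V W : FImod k) (X : FI2mod k) : Prop :=
  exists beta : forall a b, FIobj V a -> FIobj W b -> F2obj X a b,
    (forall a b, is_tensor (beta a b)) /\
    (forall a b a' b' (f : FImor a a') (g : FImor b b'), injF f -> injF g ->
       forall v w, F2map X f g (beta a b v w) = beta a' b' (FImap V f v) (FImap W g w)).

(* dim M_{a,b} = 0 for (a,b) in {(0,0),(1,0),(0,1)} (i.e. a+b<2), else 1.
   M_{a,b} = k^{dim}, as row vectors; every structure map is the identity
   k -> k (the 1x1 all-ones matrix) or a map out of / into 0. *)
Definition dM (a b : nat) : nat := if (a + b < 2)%N then 0%N else 1%N.

Definition Mobj (k : fieldType) (a b : nat) : lmodType k := 'rV[k]_(dM a b).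

Definition Mmap (k : fieldType) (a b a' b' : nat) (f : FImor a a') (g : FImor b b')
   (v : Mobj k a b) : Mobj k a' b' :=
  (v : 'rV[k]_(dM a b)) *m (const_mx 1 : 'M[k]_(dM a b, dM a' b')).

Definition Mmod (k : fieldType) : FI2mod k := @FI2Mod k (Mobj k) (@Mmap k).

(* Main.v *)
Require Import Defs.
From HB Require Import structures.
From mathcomp Require Import all_boot all_order all_algebra.
From mathcomp Require Import zify ring.
From Stdlib Require Import Classical.
Set Implicit Arguments. Unset Strict Implicit. Unset Printing Implicit Defensive.
Import GRing.Theory.
Local Open Scope ring_scope.

Section Lin.
Variables (k : fieldType) (U V : lmodType k) (f : U -> V) (Hf : linear f).
Lemma lin0 : f 0 = 0.
Proof. have := Hf 1 0 0; rewrite !scale1r addr0 => H. have := congr1 (fun x => x - f 0) H; rewrite subrr addrK. by move=> <-. Qed.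
Lemma linZ a u : f (a *: u) = a *: f u.
Proof. by have := Hf a u 0; rewrite !addr0 lin0 addr0. Qed.
Lemma linD u v : f (u + v) = f u + f v.
Proof. by have := Hf 1 u v; rewrite !scale1r. Qed.
Lemma linN u : f (- u) = - f u.
Proof. by rewrite -scaleN1r linZ scaleN1r. Qed.
End Lin.

Lemma injF_le a a' (f : FImor a a') : injF f -> (a <= a')%N.
Proof. move/injectiveP/leq_card; by rewrite !card_ord. Qed.

Lemma dM_le a b a' b' : (a <= a')%N -> (b <= b')%N -> (dM a b <= dM a' b')%N.
Proof. rewrite /dM; case: ifP; case: ifP => //; lia. Qed.

Lemma dM_le1 a b : (dM a b <= 1)%N.
Proof. by rewrite /dM; case: ifP. Qed.

Section Mx.
Variable k : fieldType.
Lemma rv_eq0 n (x : 'rV[k]_n) : (n <= 1)%N -> x != 0 -> n = 1%N /\ exists j, x 0 j != 0.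
Proof.
case: n x => [|[|n]] x // _ Hx.
- by case/eqP: Hx; apply/rowP => -[].
- split=>//; exists 0; apply: contra Hx => /eqP H; apply/eqP/rowP => j.
  by rewrite ord1 H mxE.
Qed.

Lemma rv_prop n (x x' : 'rV[k]_n) : (n <= 1)%N -> x != 0 -> exists l, x' = l *: x.
Proof.
case: n x x' => [|[|n]] x x' // _ Hx.
- by case/eqP: Hx; apply/rowP => -[].
- have H0 : x 0 0 != 0.
    apply: contra Hx => /eqP H; apply/eqP/rowP => j; by rewrite ord1 H mxE.
  exists (x' 0 0 / x 0 0); apply/rowP => j; rewrite ord1 mxE divfK //.
Qed.

Lemma J_id n (v : 'rV[k]_n) : (n <= 1)%N -> v *m (const_mx 1 : 'M_n) = v.
Proof.
case: n v => [|[|n]] v // _.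
- by rewrite !thinmx0.
- apply/rowP => j; rewrite !mxE big_ord1 !mxE mulr1 !ord1 //.
Qed.

Lemma J_comp m n p (v : 'rV[k]_m) : (m <= n)%N -> (n <= p)%N -> (p <= 1)%N ->
  v *m (const_mx 1 : 'M_(m,p)) = (v *m (const_mx 1 : 'M_(m,n))) *m (const_mx 1 : 'M_(n,p)).
Proof.
case: m v => [|[|m]] v Hmn Hnp Hp1 //.
- by rewrite !thinmx0 !mul0mx.
- have En : n = 1%N by lia. have Ep : p = 1%N by lia. subst n p.
  apply/rowP => j; rewrite !mxE !big_ord1 !mxE !big_ord1 !mxE; by rewrite mulr1 mulr1.
- lia.
Qed.

Lemma J_inj m n (v : 'rV[k]_m) : (m <= n)%N -> (m <= 1)%N ->
  v *m (const_mx 1 : 'M_(m,n)) = 0 -> v = 0.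
Proof.
case: m v => [|[|m]] v Hmn Hm1 //.
- by rewrite !thinmx0.
- case: n Hmn => // n _ /rowP /(_ ord0); rewrite !mxE big_ord1 !mxE mulr1 => H.
  by apply/rowP => j; rewrite ord1 H mxE.
Qed.
End Mx.

Lemma Misfi (k : fieldType) : isFI2mod (Mmod k).
Proof.
split.
- move=> a b a' b' f g _ _ c u v; by rewrite /= /Mmap mulmxDl scalemxAl.
- move=> a b x; rewrite /= /Mmap; exact: (J_id x (dM_le1 a b)).
- move=> a b a' b' a'' b'' f g f' g' Hf Hg Hf' Hg' x; rewrite /= /Mmap.
  apply: J_comp; [apply: dM_le; [exact: injF_le Hf|exact: injF_le Hg]| apply: dM_le; [exact: injF_le Hf'|exact: injF_le Hg'] | exact: dM_le1].
Qed.

Unset Implicit Arguments.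
Section Dsum.
Variables (k : fieldType) (I : eqType) (N : I -> FI2mod k)
  (iota : forall i a b, F2obj (N i) a b -> F2obj (Mmod k) a b)
  (H : is_dsum N (Mmod k) iota).
Set Implicit Arguments.

Definition single (i : I) a b (z : F2obj (N i) a b) : forall j, F2obj (N j) a b :=
 fun j => match i =P j with
          | ReflectT e => eq_rect i (fun j => F2obj (N j) a b) z j e
          | ReflectF _ => 0 end.

Lemma single_id i a b (z : F2obj (N i) a b) : single z i = z.
Proof. rewrite /single; case: eqP => // e; by rewrite (eq_axiomK e). Qed.

Lemma single_ne i j a b (z : F2obj (N i) a b) : i != j -> single z j = 0.
Proof. rewrite /single; case: eqP => //. Qed.

Lemma iota_lin i a b : linear (iota i a b).
Proof. exact: (H.1 i).1. Qed.

Lemma iota_inj i a b (z : F2obj (N i) a b) : iota i a b z = 0 -> z = 0.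
Proof.
move=> Hz; have := (H.2 a b).2 [:: i] (single z) (erefl _).
rewrite big_cons big_nil addr0 single_id => /(_ Hz i).
by rewrite single_id mem_seq1 eqxx => ->.
Qed.

Lemma push i a b c d (y : F2obj (N i) a b) : (a <= c)%N -> (b <= d)%N -> y != 0 ->
  exists z : F2obj (N i) c d, iota i c d z != 0.
Proof.
move=> Hac Hbd Hy.
pose f : FImor a c := [ffun x => widen_ord Hac x].
pose g : FImor b d := [ffun x => widen_ord Hbd x].
have If : injF f by apply/injectiveP => x y'; rewrite /f !ffunE; move/(congr1 val) => /= ?; exact: val_inj.
have Ig : injF g by apply/injectiveP => x y'; rewrite /g !ffunE; move/(congr1 val) => /= ?; exact: val_inj.
exists (F2map (N i) f g y).
rewrite ((H.1 i).2 a b c d f g If Ig y) /= /Mmap.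
apply/eqP => /J_inj => Hz.
have : iota i a b y = 0 by apply: Hz; [apply: dM_le | apply: dM_le1].
by move/iota_inj/eqP; rewrite (negbTE Hy).
Qed.

Lemma key i j a b a' b' (y : F2obj (N i) a b) (y' : F2obj (N j) a' b') :
  y != 0 -> y' != 0 -> i = j.
Proof.
move=> Hy Hy'.
have [z Hz] := push (leq_maxl a a') (leq_maxl b b') Hy.
have [z' Hz'] := push (leq_maxr a a') (leq_maxr b b') Hy'.
apply/eqP; apply/negPn/negP => Hij.
have [l El] := rv_prop (iota j _ _ z') (dM_le1 _ _) Hz.
pose y0 := fun m => single (l *: z) m + single (- z') m.
have := (H.2 _ _).2 [:: i; j] y0.
rewrite /= inE Hij /= => /(_ isT).
have Hji : j != i by rewrite eq_sym.
rewrite !big_cons big_nil addr0 /y0 !single_id (single_ne (- z') Hji) (single_ne (l *: z) Hij).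
rewrite addr0 add0r !(linZ (@iota_lin _ _ _)) !(linN (@iota_lin _ _ _)) -El subrr.
move=> /(_ erefl j); rewrite !inE eqxx orbT => /(_ isT) /eqP.
rewrite (single_ne (l *: z) Hij) single_id add0r oppr_eq0 => /eqP Ez'; move: Hz'; by rewrite Ez' (lin0 (@iota_lin _ _ _)) eqxx.
Qed.
End Dsum.
Set Implicit Arguments.

Lemma rv1_nz (k : fieldType) (x : 'rV[k]_1) : x != 0 -> x 0 0 != 0.
Proof. apply: contra => /eqP H; apply/eqP/rowP => j; by rewrite ord1 H mxE. Qed.

Lemma surj_nz (k : fieldType) (I : eqType) (N : I -> FI2mod k)
  (iota : forall i a b, F2obj (N i) a b -> F2obj (Mmod k) a b)
  (H : is_dsum N (Mmod k) iota) a b (x : F2obj (Mmod k) a b) :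
  x != 0 -> exists i (z : F2obj (N i) a b), z != 0.
Proof.
move=> Hx; have [s [y Ex]] := (H.2 a b).1 x.
case: (boolP (has (fun l => y l != 0) s)) => [/hasP [l _ Hl] | /hasPn Hn].
  by exists l, (y l).
move: Hx; rewrite Ex big1_seq ?eqxx // => l /andP [_ /Hn /negPn /eqP ->].
exact: lin0 (@iota_lin _ _ _ _ H l a b).
Qed.

Lemma nz_ex (k : fieldType) (X : FI2mod k) : ~ isZeroFI2 X -> exists a b (x : F2obj X a b), x != 0.
Proof.
move=> Hn; apply NNPP => He; apply Hn => a b x; apply/eqP; apply/negPn/negP => Hx.
by apply He; exists a, b, x.
Qed.

Lemma tensor_nz (k : fieldType) (U V T : lmodType k) (beta : U -> V -> T) (t : T) :
  is_tensor beta -> t != 0 -> exists u v, beta u v != 0.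
Proof.
move=> [Hb Hu] Ht; apply NNPP => Hn.
have H0 : forall u v, beta u v = 0.
  move=> u v; apply/eqP; apply/negPn/negP => Hne; by apply Hn; exists u, v.
have [psi [Lpsi Epsi Uniq]] := Hu _ beta Hb.
have e1 := Uniq id (fun a x y => erefl) (fun u v => erefl).
have e2 := Uniq (fun _ => 0) (fun a x y => esym (etrans (addr0 _) (scaler0 _ _)))
             (fun u v => esym (H0 u v)).
have E := e2 t; rewrite -(e1 t) /= in E; by rewrite -E eqxx in Ht.
Qed.

Lemma x1_nz (k : fieldType) : (const_mx 1 : 'rV[k]_1) != 0.
Proof. apply/eqP => /rowP /(_ ord0); rewrite !mxE => /eqP; by rewrite oner_eq0. Qed.

Theorem mainTheorem7 (k : fieldType) :
  isFI2mod (Mmod k) /\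
  indecomposableFI2 (Mmod k) /\
  ~ (exists (I : eqType) (V W : I -> FImod k) (N : I -> FI2mod k)
            (iota : forall i a b, F2obj (N i) a b -> F2obj (Mmod k) a b),
       (forall i, [/\ isFImod (V i), isFImod (W i), isFI2mod (N i)
                    & is_ext_tensor (V i) (W i) (N i)]) /\
       is_dsum N (Mmod k) iota).
Proof.
split; first exact: Misfi.
have X20 : (const_mx 1 : F2obj (Mmod k) 2%N 0%N) != 0 by exact: x1_nz.
have X02 : (const_mx 1 : F2obj (Mmod k) 0%N 2%N) != 0 by exact: x1_nz.
split.
  split; first by move=> Hz; move/eqP: X20; apply; apply: Hz.
  move=> N iota _ Hd; apply NNPP => Hn.
  have [a [b [x Hx]]] := nz_ex (fun h => Hn (ex_intro _ true h)).
  have [a' [b' [x' Hx']]] := nz_ex (fun h => Hn (ex_intro _ false h)).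
  by have := key Hd Hx Hx'.
move=> [I [V [W [N [iota [HV Hd]]]]]].
have [i [z1 Hz1]] := surj_nz Hd X20.
have [i' [z2 Hz2]] := surj_nz Hd X02.
have Eii := key Hd Hz1 Hz2; subst i'.
have [_ _ _ [beta [Ht Hmap]]] := HV i.
have [v2 [w0 Hvw]] := tensor_nz (Ht 2%N 0%N) Hz1.
have [u0 [w2 Huw]] := tensor_nz (Ht 0%N 2%N) Hz2.
have Hl := @iota_lin _ _ _ _ Hd i.
pose l (w : FIobj (W i) 0%N) := (iota i 2%N 0%N (beta 2%N 0%N v2 w) : 'rV[k]_1) 0 0.
pose m (u : FIobj (V i) 0%N) := (iota i 0%N 2%N (beta 0%N 2%N u w2) : 'rV[k]_1) 0 0.
have Hl0 : l w0 != 0.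
  apply: rv1_nz; apply: contra Hvw => /eqP E; apply/eqP; apply: (iota_inj Hd); exact: E.
have Hm0 : m u0 != 0.
  apply: rv1_nz; apply: contra Huw => /eqP E; apply/eqP; apply: (iota_inj Hd); exact: E.
pose phi u w : 'rV[k]_1 := const_mx (m u * l w).
have Hphi : bilinear_map phi.
  have [[Hb1 Hb2] _] := Ht 0%N 2%N. have [[Hc1 Hc2] _] := Ht 2%N 0%N.
  split.
  - move=> w c u u'; apply/rowP => j; rewrite !mxE /m.
    have := Hb1 w2 c u u'; rewrite /= => ->.
    rewrite (Hl 0%N 2%N c) !mxE; ring.
  - move=> u c w w'; apply/rowP => j; rewrite !mxE /l.
    have := Hc2 v2 c w w'; rewrite /= => ->.
    rewrite (Hl 2%N 0%N c) !mxE; ring.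
have [psi [Lpsi Epsi _]] := (Ht 0%N 0%N).2 _ phi Hphi.
have B0 : beta 0%N 0%N u0 w0 = 0 by apply: (iota_inj Hd); exact: thinmx0.
have := Epsi u0 w0; rewrite B0 (lin0 Lpsi) => /rowP /(_ ord0).
rewrite !mxE => /esym /eqP; by rewrite mulf_eq0 (negbTE Hl0) (negbTE Hm0).
Qed.
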